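(* Let $\rho:\mathfrak{S}_n\to\mathrm{GL}_N(\mathbb{R})$ be a representation and $\varphi:\mathcal{T}_n\to\mathfrak{gl}_N(\mathbb{R})$ a Lie algebra representation compatible with $\rho$, i.e. $\rho(w)\varphi(t_{ij})\rho(w)^{-1}=\varphi(t_{w(i),w(j)})$. Let $R:B_n\to\mathrm{GL}_N(\mathbb{R}[[h]])$ be the representation obtained from a real Drinfeld associator $\Phi\in M_1(\mathbb{R})$ as described in the context. If $\rho(\mathfrak{S}_n)\subset O_N(\mathbb{R})$ and ${}^t\varphi(t_{ij})=\varphi(t_{ij})$ for all $i,j$, then $R(B_n)\subset U_N^{\epsilon}(\mathbb{R}((h)))$.
   Context: $\mathcal{T}_n$ is the Lie algebra (over $\mathbb{R}$) with generators $t_{ij}$, $1\le i,j\le n$, and relations $t_{ii}=0$, $t_{ij}=t_{ji}$, $[t_{ij},t_{ik}+t_{kj}]=0$, $[t_{ij},t_{kl}]=0$ when $\#\{i,j,k,l\}=4$; $\mathfrak{S}_n$ acts by $w.t_{ij}=t_{w(i)w(j)}$; $\widehat{\mathcal{T}}_n$ is its completion for the grading $\deg t_{ij}=1$. $M_1(\mathbb{R})$ denotes the set of Drinfeld associators with real coefficients (group-like formal series $\Phi(A,B)=\exp\Psi(A,B)$, $\Psi$ a Lie series, satisfying Drinfeld's pentagon and hexagon relations with parameter normalized so that) each $\Phi$ determines a group morphism $B_n\to\mathfrak{S}_n\ltimes\exp\widehat{\mathcal{T}}_n$ with $\sigma_1\mapsto(1\,2)\exp(t_{12})$, and each $\sigma_i$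 mapped to a conjugate of $(i\ i{+}1)\exp(t_{i,i+1})$ by an element $\Phi(x,y)$ where $x,y$ are linear combinations of the $t_{jk}$. Composing with $t_{ij}\mapsto h\varphi(t_{ij})$ and $w\mapsto\rho(w)$ yields $R:B_n\to\mathrm{GL}_N(\mathbb{R}[[h]])$. $\epsilon$ is the automorphism $f(h)\mapsto f(-h)$ of $\mathbb{R}((h))$, and $U_N^{\epsilon}(\mathbb{R}((h)))=\{X\in\mathrm{GL}_N(\mathbb{R}((h)))\mid X^{-1}={}^t\epsilon(X)\}$. *)

(* Defs.v *)
From HB Require Import structures.
From mathcomp Require Import all_boot all_order all_algebra all_fingroup.
From mathcomp Require Import reals.
Set Implicit Arguments. Unset Strict Implicit. Unset Printing Implicit Defensive.
Import Order.TTheory GRing.Theory Num.Theory.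
Local Open Scope ring_scope.

(* Noncommutative formal power series over a letter type L: a series is the *)
(* function giving the coefficient of each word.                             *)
Section NSeries.
Variables (R : fieldType) (L : eqType).

Definition nser := seq L -> R.
Definition nsone : nser := fun w => if w is [::] then 1 else 0.
Definition nszero : nser := fun _ => 0.
Definition nsletter (a : L) : nser := fun w => if w == [:: a] then 1 else 0.
Definition nsadd (F G : nser) : nser := fun w => F w + G w.
Definition nssub (F G : nser) : nser := fun w => F w - G w.
Definition nsopp (F : nser) : nser := fun w => - F w.
Definition nsscale (c : R) (F : nser) : nser := fun w => c * F w.
Definition nsmul (F G : nser) : nser :=
  fun w => \sum_(k < (size w).+1) F (take k w) * G (drop k w).
Definition nsbr (F G : nser) : nser := nssub (nsmul F G) (nsmul G F).
Fixpoint nsexpn (F : nser) (k : nat) : nser :=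
  if k is k'.+1 then nsmul F (nsexpn F k') else nsone.
(* exponential of a series with zero constant term *)
Definition nsexp (F : nser) : nser :=
  fun w => \sum_(k < (size w).+1) (k`!%:R)^-1 * nsexpn F k w.
Definition nshom (d : nat) (F : nser) : nser :=
  fun w => if size w == d then F w else 0.

Inductive lie_poly : nser -> Prop :=
| lie_letter a : lie_poly (nsletter a)
| lie_zero : lie_poly nszero
| lie_add F G : lie_poly F -> lie_poly G -> lie_poly (nsadd F G)
| lie_scale c F : lie_poly F -> lie_poly (nsscale c F)
| lie_br F G : lie_poly F -> lie_poly G -> lie_poly (nsbr F G)
| lie_ext F G : (forall w, F w = G w) -> lie_poly F -> lie_poly G.

Definition lie_series (F : nser) := forall d, lie_poly (nshom d F).

Definition grouplike (Phi : nser) :=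
  exists Psi, lie_series Psi /\ forall w, Phi w = nsexp Psi w.

(* substitution of series U, V (zero constant terms) into a series in two
   noncommuting variables A (= false) and B (= true) *)
Fixpoint bwords (k : nat) : seq (seq bool) :=
  if k is k'.+1 then [seq b :: w | b <- [:: false; true], w <- bwords k']
  else [:: [::]].

Fixpoint nsword (U V : nser) (u : seq bool) : nser :=
  if u is b :: u' then nsmul (if b then V else U) (nsword U V u') else nsone.

Definition nssubst (Phi : seq bool -> R) (U V : nser) : nser :=
  fun w => \sum_(k < (size w).+1) \sum_(u <- bwords k) Phi u * nsword U V u w.

End NSeries.

Section Associator.
Variable R : fieldType.

Definition nsA : nser R bool := nsletter R false.
Definition nsB : nser R bool := nsletter R true.
Definition nsC : nser R bool := nsopp (nsadd nsA nsB).

Definition assoc_inv (Phi : seq bool -> R) :=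
  forall w, nsmul (nssubst Phi nsB nsA) Phi w = nsone R w.

(* hexagon, normalized so that sigma_1 |-> (1 2) exp(t_12):
   e^{A} Phi(C,A) e^{C} Phi(B,C) e^{B} Phi(A,B) = 1 with A + B + C = 0 *)
Definition assoc_hexagon (Phi : seq bool -> R) :=
  forall w,
    nsmul (nsexp nsA) (nsmul (nssubst Phi nsC nsA) (nsmul (nsexp nsC)
      (nsmul (nssubst Phi nsB nsC) (nsmul (nsexp nsB) Phi)))) w = nsone R w.

(* the completed enveloping algebra of T_4: free series on the letters t_ij
   modulo the closed (homogeneous) ideal generated by the defining relations *)
Notation L4 := ('I_4 * 'I_4)%type.
Definition t4 (i j : 'I_4) : nser R L4 := nsletter R (i, j).

Inductive t4_ideal : nser R L4 -> Prop :=
| ti_zero : t4_ideal (@nszero R L4)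
| ti_diag i : t4_ideal (t4 i i)
| ti_sym i j : t4_ideal (nssub (t4 i j) (t4 j i))
| ti_rel3 i j k : uniq [:: i; j; k] ->
    t4_ideal (nsbr (t4 i j) (nsadd (t4 i k) (t4 k j)))
| ti_rel4 i j k l : uniq [:: i; j; k; l] -> t4_ideal (nsbr (t4 i j) (t4 k l))
| ti_add F G : t4_ideal F -> t4_ideal G -> t4_ideal (nsadd F G)
| ti_scale c F : t4_ideal F -> t4_ideal (nsscale c F)
| ti_mull a F : t4_ideal F -> t4_ideal (nsmul (nsletter R a) F)
| ti_mulr F a : t4_ideal F -> t4_ideal (nsmul F (nsletter R a))
| ti_ext F G : (forall w, F w = G w) -> t4_ideal F -> t4_ideal G.

(* equality in the completion \hat U(T_4) (the ideal is homogeneous) *)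
Definition U4eq (F G : nser R L4) :=
  forall d, t4_ideal (nshom d (nssub F G)).

Definition i0 : 'I_4 := @Ordinal 4 0 isT.
Definition i1 : 'I_4 := @Ordinal 4 1 isT.
Definition i2 : 'I_4 := @Ordinal 4 2 isT.
Definition i3 : 'I_4 := @Ordinal 4 3 isT.

(* pentagon (indices 1,2,3,4 of the paper are i0,i1,i2,i3):
   Phi(t12,t23+t24) Phi(t13+t23,t34) = Phi(t23,t34) Phi(t12+t13,t24+t34) Phi(t12,t23) *)
Definition assoc_pentagon (Phi : seq bool -> R) :=
  U4eq
    (nsmul (nssubst Phi (t4 i0 i1) (nsadd (t4 i1 i2) (t4 i1 i3)))
           (nssubst Phi (nsadd (t4 i0 i2) (t4 i1 i2)) (t4 i2 i3)))
    (nsmul (nssubst Phi (t4 i1 i2) (t4 i2 i3))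
      (nsmul (nssubst Phi (nsadd (t4 i0 i1) (t4 i0 i2)) (nsadd (t4 i1 i3) (t4 i2 i3)))
             (nssubst Phi (t4 i0 i1) (t4 i1 i2)))).

Definition drinfeld_associator (Phi : seq bool -> R) :=
  [/\ grouplike Phi, assoc_inv Phi, assoc_hexagon Phi & assoc_pentagon Phi].

End Associator.

(* Matrix-valued formal power series in h: X = \sum_k h^k X k               *)
Section MxSeries.
Variables (R : fieldType) (N : nat).

Definition ms := nat -> 'M[R]_N.
Definition msone : ms := fun k => if k == 0%N then 1%:M else 0.
Definition msconst (M : 'M[R]_N) : ms := fun k => if k == 0%N then M else 0.
Definition msmul (X Y : ms) : ms := fun k => \sum_(j < k.+1) X j *m Y (k - j)%N.
Fixpoint mxpow (M : 'M[R]_N) (k : nat) : 'M[R]_N :=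
  if k is k'.+1 then M *m mxpow M k' else 1%:M.
Definition msexph (M : 'M[R]_N) : ms := fun k => (k`!%:R)^-1 *: mxpow M k.
Definition mxword (P Q : 'M[R]_N) (u : seq bool) : 'M[R]_N :=
  foldr (fun b M => (if b then Q else P) *m M) 1%:M u.
Definition mssubst (Phi : seq bool -> R) (P Q : 'M[R]_N) : ms :=
  fun k => \sum_(u <- bwords k) Phi u *: mxword P Q u.
(* inverse of a series whose constant term is invertible *)
Fixpoint msinv_seq (X : ms) (k : nat) : seq 'M[R]_N :=
  if k is k'.+1 then
    let s := msinv_seq X k' in
    rcons s (- (invmx (X 0%N) *m \sum_(j < k'.+1) X j.+1 *m nth 0 s (k' - j)%N))
  else [:: invmx (X 0%N)].
Definition msinv (X : ms) : ms := fun k => nth 0 (msinv_seq X k) k.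
Definition mstr (X : ms) : ms := fun k => (X k)^T.
Definition mseps (X : ms) : ms := fun k => (-1) ^+ k *: X k.
Definition unitary_eps (X : ms) :=
  forall k, msmul X (mseps (mstr X)) k = msone k /\
            msmul (mseps (mstr X)) X k = msone k.
End MxSeries.

Lemma gen_lo_proof n (i : 'I_n.-1) : (i < n)%N.
Proof. case: n i => [|n] [i /= Hi] //; by apply: ltn_trans Hi _. Qed.
Lemma gen_hi_proof n (i : 'I_n.-1) : (i.+1 < n)%N.
Proof. by case: n i => [|n] [i /= Hi]. Qed.

(* for i : 'I_n.-1 (the generator sigma_{i+1}), the indices i, i+1 in 'I_n *)
Definition gen_lo n (i : 'I_n.-1) : 'I_n := Ordinal (gen_lo_proof i).
Definition gen_hi n (i : 'I_n.-1) : 'I_n := Ordinal (gen_hi_proof i).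

Section Reps.
Variables (R : fieldType) (n N : nat).

Definition mxcomm (A B : 'M[R]_N) := A *m B - B *m A.

Definition is_Tn_rep (phi : 'I_n -> 'I_n -> 'M[R]_N) :=
  [/\ forall i, phi i i = 0,
      forall i j, phi i j = phi j i,
      forall i j k, uniq [:: i; j; k] -> mxcomm (phi i j) (phi i k + phi k j) = 0
    & forall i j k l, uniq [:: i; j; k; l] -> mxcomm (phi i j) (phi k l) = 0].

(* phi(x) for x = \sum_{j,k} c j k t_jk *)
Definition phil (phi : 'I_n -> 'I_n -> 'M[R]_N) (c : 'I_n -> 'I_n -> R) : 'M[R]_N :=
  \sum_j \sum_k c j k *: phi j k.

(* R(sigma_{i+1}) = Phi(x,y)^{-1} rho((i i+1)) exp(h phi(t_{i,i+1})) Phi(x,y)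
   with x = hphi(x_i), y = hphi(y_i), x_i, y_i linear combinations of the t_jk *)
Definition Bn_gen (rho : {perm 'I_n} -> 'M[R]_N) (phi : 'I_n -> 'I_n -> 'M[R]_N)
  (Phi : seq bool -> R) (cx cy : 'I_n.-1 -> 'I_n -> 'I_n -> R) (i : 'I_n.-1) : ms R N :=
  let X := mssubst Phi (phil phi (cx i)) (phil phi (cy i)) in
  msmul (msinv X)
    (msmul (msconst (rho (tperm (gen_lo i) (gen_hi i))))
       (msmul (msexph (phi (gen_lo i) (gen_hi i))) X)).

(* value of R on a word in the generators sigma_i^{+1} (true) / sigma_i^{-1} (false);
   R(B_n) is the set of these values *)
Definition Bn_word rho phi Phi cx cy (w : seq (bool * 'I_n.-1)) : ms R N :=
  foldr (fun bi Y => msmul (if bi.1 then Bn_gen rho phi Phi cx cy bi.2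
                            else msinv (Bn_gen rho phi Phi cx cy bi.2)) Y)
        (msone R N) w.

End Reps.

(* Main.v *)
Require Import Defs.
From HB Require Import structures.
From mathcomp Require Import all_boot all_order all_algebra all_fingroup.
From mathcomp Require Import reals.
Import Order.TTheory GRing.Theory Num.Theory.
Local Open Scope ring_scope.
From Stdlib Require Import FunctionalExtensionality.
From mathcomp Require Import zify ring lra.
Set Implicit Arguments. Unset Strict Implicit. Unset Printing Implicit Defensive.
Import Order.TTheory GRing.Theory Num.Theory.
Local Open Scope ring_scope.


Lemma tri_sum (V : zmodType) K (F : nat -> nat -> V) :
  \sum_(0 <= m < K) \sum_(0 <= a < m.+1) F a (m - a)%N =
  \sum_(0 <= a < K) \sum_(0 <= b < K - a) F a b.
Proof.
elim: K => [|K IH]; first by rewrite !big_geq.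
rewrite big_nat_recr //= IH [in RHS]big_nat_recr //= subSn // subnn.
rewrite big_nat_recr //= [X in _ = _ + X]big_nat1.
rewrite subnn addrA; congr (_ + _).
rewrite [RHS](eq_big_nat _ _ (F2 := fun i => \sum_(0 <= b < K - i) F i b + F i (K - i)%N)).
  by rewrite big_split.
move=> a /andP[_ ha]. rewrite (subSn (ltnW ha)).
rewrite big_nat_recr //.
Qed.
Section Comb.
Variables (R : numFieldType) (V : lmodType R).

Lemma binom_alt m : (0 < m)%N ->
  \sum_(0 <= a < m.+1) ((-1) ^+ a / (a`!%:R) * ((m - a)`!%:R)^-1) = 0 :> R.
Proof.
move=> hm.
have fn k : (k`!%:R : R) != 0 by rewrite pnatr_eq0 -lt0n fact_gt0.
transitivity (\sum_(0 <= a < m.+1) (m`!%:R)^-1 * (((1 : R) ^+ (m - a) * (-1) ^+ a) *+ 'C(m, a))).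
  apply: eq_big_nat => a /andP[_ ha].
  have := bin_fact (m := a) (n := m); rewrite -ltnS ha => /(_ isT) hb.
  rewrite expr1n.
  have hC : ('C(m, a)%:R : R) != 0 by rewrite pnatr_eq0 -lt0n bin_gt0 -ltnS.
  rewrite mul1r -mulr_natr -hb !natrM.
  by field; rewrite hC !fn.
rewrite -mulr_sumr big_mkord -exprDn.
by rewrite subrr expr0n gtn_eqF // mulr0.
Qed.
Lemma comb K (f : nat -> V) : (0 < K)%N -> (forall m, (K <= m)%N -> f m = 0) ->
  \sum_(a < K) \sum_(b < K) (((-1) ^+ a / a`!%:R) * (b`!%:R)^-1) *: f (a + b)%N = f 0%N.
Proof.
move=> hK hf.
transitivity (\sum_(0 <= a < K) \sum_(0 <= b < K - a)
                 (((-1) ^+ a / a`!%:R) * (b`!%:R)^-1) *: f (a + b)%N).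
  symmetry; rewrite big_mkord; apply: eq_bigr => a _.
  have ha := ltn_ord a.
  pose G := fun b : nat => ((-1) ^+ a / a`!%:R * (b`!%:R)^-1) *: f (a + b)%N.
  rewrite (_ : \sum_(b < K) _ = \sum_(0 <= b < K) G b); last by rewrite big_mkord.
  rewrite (_ : \sum_(0 <= b < K - a) _ = \sum_(0 <= b < K - a) G b) //.
  rewrite [RHS](big_cat_nat _ (n := (K - a)%N)) ?leq_subr //=.
  rewrite [X in _ = _ + X]big1_seq ?addr0 // => b /andP[_]; rewrite mem_index_iota => /andP[hb _].
  rewrite /G hf ?scaler0 //; lia.
rewrite -(tri_sum K (fun a b => (((-1) ^+ a / a`!%:R) * (b`!%:R)^-1) *: f (a + b)%N)).
rewrite (eq_big_nat _ _ (F2 := fun m => (\sum_(0 <= a < m.+1)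
     (((-1) ^+ a / a`!%:R) * ((m - a)`!%:R)^-1)) *: f m)); last first.
  move=> m _; rewrite scaler_suml; apply: eq_big_nat => a /andP[_ ha].
  by rewrite subnKC // -ltnS.
case: K hK hf => // K _ hf; rewrite big_nat_recl //= big_nat1 subnn /= expr0 !invr1 !mulr1 scale1r.
by rewrite big1_seq ?addr0 // => m _; rewrite binom_alt ?scale0r.
Qed.
End Comb.

Section MS.
Variables (R : numFieldType) (N : nat).
Local Notation ms := (ms R N).
Implicit Types X Y Z : ms.

Lemma msmul_rev X Y k : msmul X Y k = \sum_(j < k.+1) X (k - j)%N *m Y j.
Proof.
rewrite /msmul (reindex_inj rev_ord_inj) /=.
by apply: eq_bigr => j _; rewrite (sub_ordK j).
Qed.

Lemma msmulA X Y Z : msmul X (msmul Y Z) = msmul (msmul X Y) Z.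
Proof.
apply: functional_extensionality => i.
rewrite /msmul.
pose coef3 j k := X j *m (Y (i - j - k)%N *m Z k).
transitivity (\sum_(j < i.+1) \sum_(k < i.+1 | (k <= i - j)%N) coef3 j k).
  apply: eq_bigr => /= j _; rewrite -/(msmul Y Z _) msmul_rev mulmx_sumr /=.
  by rewrite (big_ord_narrow_leq (leq_subr _ _)).
rewrite (exchange_big_dep predT) //=.
rewrite [RHS](reindex_inj rev_ord_inj) /=.
apply: eq_bigr => k _; rewrite (sub_ordK k).
transitivity (\sum_(j < i.+1 | (j <= i - k)%N) coef3 j k).
  apply: eq_bigl => j; rewrite -ltnS -(ltnS j) -!subSn ?leq_ord //.
  by rewrite -subn_gt0 -(subn_gt0 j) -!subnDA addnC.
rewrite (big_ord_narrow_leq (leq_subr _ _)) mulmx_suml /=.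
by apply: eq_bigr => j _; rewrite /coef3 -!subnDA addnC mulmxA.
Qed.

Lemma msmul1l X : msmul (msone R N) X = X.
Proof.
apply: functional_extensionality => k; rewrite /msmul big_ord_recl /= subn0 mul1mx.
by rewrite big1 ?addr0 // => j _; rewrite /msone /= mul0mx.
Qed.

Lemma msmul1r X : msmul X (msone R N) = X.
Proof.
apply: functional_extensionality => k; rewrite msmul_rev big_ord_recl /= subn0 mulmx1.
by rewrite big1 ?addr0 // => j _; rewrite /msone /= mulmx0.
Qed.

Definition star X : ms := mseps (mstr X).

Lemma sign_sq k : ((-1) ^+ k * (-1) ^+ k : R) = 1.
Proof. by rewrite -exprD addnn -muln2 exprM sqrr_sign. Qed.

Lemma starK X : star (star X) = X.
Proof.
apply: functional_extensionality => k; rewrite /star /mseps /mstr.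
by rewrite linearZ /= trmxK scalerA sign_sq scale1r.
Qed.

Lemma star_mul X Y : star (msmul X Y) = msmul (star Y) (star X).
Proof.
apply: functional_extensionality => k; rewrite /star /mseps /mstr msmul_rev /msmul.
rewrite linear_sum scaler_sumr; apply: eq_bigr => j _ /=.
rewrite trmx_mul -scalemxAl -scalemxAr scalerA -exprD subnKC //.
by rewrite -ltnS ltn_ord.
Qed.

Lemma star_one : star (msone R N) = msone R N.
Proof.
apply: functional_extensionality => k; rewrite /star /mseps /mstr /msone.
by case: k => [|k] /=; rewrite ?trmx1 ?trmx0 ?expr0 ?scale1r ?scaler0.
Qed.

Lemma msinv_nth X k j : (j <= k)%N -> nth 0 (msinv_seq X k) j = msinv X j.
Proof.
elim: k j => [|k IH] j hj.
  by move: hj; rewrite leqn0 => /eqP ->.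
rewrite leq_eqVlt in hj; case/orP: hj => [/eqP -> //|hj].
have hs : size (msinv_seq X k) = k.+1.
  by case: (k) => [|k'] //=; rewrite size_rcons; elim: k' => [|k'' IH'] //=; rewrite size_rcons IH'.
by rewrite /= nth_rcons hs hj IH.
Qed.

Lemma msinv_size X k : size (msinv_seq X k) = k.+1.
Proof. by elim: k => [|k IH] //=; rewrite size_rcons IH. Qed.

Lemma msinvS X k : msinv X k.+1 =
  - (invmx (X 0%N) *m \sum_(j < k.+1) X j.+1 *m msinv X (k - j)%N).
Proof.
rewrite {1}/msinv /= nth_rcons msinv_size ltnn eqxx; congr (- (_ *m _)).
by apply: eq_bigr => j _; rewrite msinv_nth // leq_subr.
Qed.

Lemma msinvR X : X 0%N \in unitmx -> msmul X (msinv X) = msone R N.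
Proof.
move=> hu; apply: functional_extensionality => k; case: k => [|k].
  by rewrite /msmul big_ord1 /msinv /= mulmxV.
rewrite /msmul big_ord_recl subn0 msinvS mulmxN mulmxA mulmxV // mul1mx.
rewrite /msone /=; apply/eqP; rewrite addrC subr_eq0; apply/eqP.
by apply: eq_bigr => j _; rewrite /bump /= add1n subSS.
Qed.

Lemma inv_unique X Z S : msmul Z X = msone R N -> msmul X S = msone R N -> S = Z.
Proof. by move=> h1 h2; rewrite -[S]msmul1l -h1 -msmulA h2 msmul1r. Qed.

Fixpoint mspow (Y : ms) (m : nat) : ms :=
  if m is m'.+1 then msmul Y (mspow Y m') else msone R N.

Definition msexp (Y : ms) : ms :=
  fun d => \sum_(m < d.+1) (m`!%:R)^-1 *: mspow Y m d.

Definition msopp (Y : ms) : ms := fun k => - Y k.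

Lemma mspowD Y a b : msmul (mspow Y a) (mspow Y b) = mspow Y (a + b).
Proof. by elim: a => [|a IH] /=; rewrite ?msmul1l // -msmulA IH. Qed.

Lemma mspow_small Y m d : Y 0%N = 0 -> (d < m)%N -> mspow Y m d = 0.
Proof.
move=> h0; elim: m d => [//|m IH] d hd /=.
rewrite /msmul big1 // => j _; case: j => [[|j] hj] /=.
  by rewrite h0 mul0mx.
by rewrite IH ?mulmx0 //; lia.
Qed.

Lemma mspow_opp Y m k : mspow (msopp Y) m k = (-1) ^+ m *: mspow Y m k.
Proof.
elim: m k => [|m IH] k /=; first by rewrite scale1r.
rewrite /msmul scaler_sumr; apply: eq_bigr => j _.
by rewrite IH /msopp mulNmx -scalemxAr exprS mulN1r scaleNr.
Qed.

Lemma msexp_wide Y j K : Y 0%N = 0 -> (j < K)%N ->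
  msexp Y j = \sum_(a < K) (a`!%:R)^-1 *: mspow Y a j.
Proof.
move=> h0 hj; rewrite /msexp (big_ord_widen K (fun a => (a`!%:R)^-1 *: mspow Y a j) hj).
rewrite big_mkcond /=; apply: eq_bigr => a _; case: ifP => // ha.
by rewrite mspow_small ?scaler0 // ltnNge -ltnS ha.
Qed.

End MS.

Section MS2.
Variables (R : numFieldType) (N : nat).
Local Notation ms := (ms R N).
Implicit Types X Y Z : ms.
Lemma msexp_inv Y : Y 0%N = 0 -> msmul (msexp (msopp Y)) (msexp Y) = msone R N.
Proof.
move=> h0; apply: functional_extensionality => d.
have h0' : msopp Y 0%N = 0 by rewrite /msopp h0 oppr0.
have hw1 j : (j <= d)%N -> msexp (msopp Y) j =
    \sum_(a < d.+1) ((-1) ^+ a / a`!%:R) *: mspow Y a j.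
  move=> hj; rewrite (msexp_wide h0' (K := d.+1)) ?ltnS //.
  by apply: eq_bigr => a _; rewrite mspow_opp scalerA mulrC.
have hw2 j : (j <= d)%N -> msexp Y j = \sum_(b < d.+1) (b`!%:R)^-1 *: mspow Y b j.
  by move=> hj; rewrite (msexp_wide h0 (K := d.+1)) ?ltnS.
rewrite /msmul.
transitivity (\sum_(j < d.+1) \sum_(a < d.+1) \sum_(b < d.+1)
   (((-1) ^+ a / a`!%:R) * (b`!%:R)^-1) *: (mspow Y a j *m mspow Y b (d - j)%N)).
  apply: eq_bigr => j _.
  have hj : (j <= d)%N by rewrite -ltnS ltn_ord.
  rewrite (hw1 _ hj) (hw2 _ (leq_subr _ _)).
  rewrite mulmx_suml; apply: eq_bigr => a _; rewrite mulmx_sumr; apply: eq_bigr => b _.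
  by rewrite -scalemxAl -scalemxAr scalerA.
rewrite exchange_big /=.
transitivity (\sum_(a < d.+1) \sum_(b < d.+1)
   (((-1) ^+ a / a`!%:R) * (b`!%:R)^-1) *: mspow Y (a + b)%N d).
  apply: eq_bigr => a _; rewrite exchange_big /=; apply: eq_bigr => b _.
  by rewrite -scaler_sumr -(mspowD Y a b).
apply: (@comb _ _ d.+1 (fun m => mspow Y m d)) => // m hm.
exact: (mspow_small h0 hm).
Qed.
End MS2.

Section MS3.
Variables (R : numFieldType) (N : nat).
Local Notation ms := (ms R N).
Implicit Types X Y Z : ms.

Definition uni X := msmul X (star X) = msone R N /\ msmul (star X) X = msone R N.

Lemma uni_mul X Y : uni X -> uni Y -> uni (msmul X Y).
Proof.
move=> [h1 h2] [h3 h4]; split; rewrite star_mul.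
  by rewrite -msmulA (msmulA Y) h3 msmul1l h1.
by rewrite -msmulA (msmulA (star X)) h2 msmul1l h4.
Qed.

Lemma uni_star X : uni X -> uni (star X).
Proof. by move=> [h1 h2]; split; rewrite starK. Qed.

Lemma uni_inv X : uni X -> msinv X = star X.
Proof.
move=> [h1 h2]; apply: inv_unique h2 _; apply: msinvR.
have := congr1 (fun F => F 0%N) h1; rewrite /msmul big_ord1 /= => h.
by case: (mulmx1_unit h).
Qed.

Lemma uni_gen Xs C E : uni Xs -> uni C -> uni E ->
  uni (msmul (msinv Xs) (msmul C (msmul E Xs))).
Proof.
move=> hX hC hE; rewrite uni_inv //.
by apply: uni_mul; [apply: uni_star | apply: uni_mul => //; apply: uni_mul].
Qed.

Lemma mspow_comm Z m : msmul (mspow Z m) Z = msmul Z (mspow Z m).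
Proof.
have -> : msmul (mspow Z m) Z = msmul (mspow Z m) (mspow Z 1).
  by rewrite /= msmul1r.
by rewrite mspowD addn1.
Qed.

Lemma star_pow Y m : star (mspow Y m) = mspow (star Y) m.
Proof.
elim: m => [|m IH] /=; first by rewrite star_one.
by rewrite star_mul IH mspow_comm.
Qed.

Lemma star_exp Y : star (msexp Y) = msexp (star Y).
Proof.
apply: functional_extensionality => d; rewrite /star /mseps /mstr /msexp.
rewrite linear_sum scaler_sumr; apply: eq_bigr => m _ /=.
rewrite linearZ /= scalerA mulrC -scalerA -star_pow //.
Qed.

Lemma uni_exp Y : Y 0%N = 0 -> star Y = msopp Y -> uni (msexp Y).
Proof.
move=> h0 hs; rewrite /uni star_exp hs; split; last exact: msexp_inv.
have h0' : msopp Y 0%N = 0 by rewrite /msopp h0 oppr0.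
have := msexp_inv h0'.
have -> : msopp (msopp Y) = Y.
  by apply: functional_extensionality => k; rewrite /msopp opprK.
by [].
Qed.

Definition msT (T : 'M[R]_N) : ms := fun k => if k == 1%N then T else 0.

Lemma mspow_T T m d : mspow (msT T) m d = if d == m then mxpow T m else 0.
Proof.
elim: m d => [|m IH] d /=; first by rewrite /msone.
case: d => [|d]; first by rewrite /msmul big_ord1 /msT /= mul0mx.
rewrite /msmul big_ord_recl /msT /= mul0mx add0r big_ord_recl /= subSS subn0 IH.
rewrite big1 ?addr0 => [|j _]; last by rewrite /= mul0mx.
by rewrite eqSS; case: (d == m); rewrite ?mulmx0.
Qed.

Lemma msexp_T T : msexp (msT T) = msexph T.
Proof.
apply: functional_extensionality => d; rewrite /msexp big_ord_recr /= mspow_T eqxx.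
rewrite big1 ?add0r // => m _; rewrite mspow_T.
by case: (m) => /= k hk; rewrite gtn_eqF // scaler0.
Qed.

Lemma star_T T : T^T = T -> star (msT T) = msopp (msT T).
Proof.
move=> hT; apply: functional_extensionality => k; rewrite /star /mseps /mstr /msopp /msT.
case: k => [|[|k]] /=; rewrite ?trmx0 ?scaler0 ?oppr0 //.
by rewrite hT expr1 scaleN1r.
Qed.

Lemma uni_exph T : T^T = T -> uni (msexph T).
Proof.
move=> hT; rewrite -msexp_T; apply: uni_exp; last exact: star_T.
by rewrite /msT.
Qed.

Lemma msmul_const (A B : 'M[R]_N) : msmul (msconst A) (msconst B) = msconst (A *m B).
Proof.
apply: functional_extensionality => k; rewrite /msmul /msconst.
case: k => [|k]; first by rewrite big_ord1.
rewrite big1 // => j _; case: eqP => hj; last by rewrite mul0mx.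
by rewrite hj subn0 /= mulmx0.
Qed.

Lemma star_const (A : 'M[R]_N) : star (msconst A) = msconst A^T.
Proof.
apply: functional_extensionality => k; rewrite /star /mseps /mstr /msconst.
by case: k => [|k] /=; rewrite ?expr0 ?scale1r ?trmx0 ?scaler0.
Qed.

Lemma uni_const (A : 'M[R]_N) : A *m A^T = 1%:M -> uni (msconst A).
Proof.
move=> h; rewrite /uni star_const !msmul_const h (mulmx1C h); split; by [].
Qed.
End MS3.


Section NS.
Variables (R : numFieldType) (L : eqType).
Local Notation nser := (nser R L).
Implicit Types F G : nser.

Definition nsS F : nser := fun w => (-1) ^+ (size w) * F (rev w).

Lemma nsS_mul F G w : nsS (nsmul F G) w = nsmul (nsS G) (nsS F) w.
Proof.
rewrite /nsS /nsmul size_rev mulr_sumr (reindex_inj rev_ord_inj).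
apply: eq_bigr => j _ /=.
have hj : (j <= size w)%N by rewrite -ltnS ltn_ord.
rewrite subSS take_rev drop_rev subKn // size_takel // size_drop.
rewrite -{1}(subnKC hj) exprD; ring.
Qed.

Lemma lie_S F : lie_poly F -> (forall w, nsS F w = - F w) /\ F [::] = 0.
Proof.
elim => {F}.
- move=> a; split => // w; rewrite /nsS /nsletter.
  case: (boolP (w == [:: a])) => [/eqP -> | hw] /=; first by rewrite eqxx expr1 mulr1.
  case: eqP => [h|_]; last by rewrite mulr0 oppr0.
  have := congr1 rev h; rewrite revK /= => h'.
  by rewrite h' eqxx in hw.
- by split => // w; rewrite /nsS /nszero mulr0 oppr0.
- move=> F G _ [h1 h2] _ [h3 h4]; split; last by rewrite /nsadd h2 h4 addr0.
  by move=> w; rewrite /nsS /nsadd mulrDr -/(nsS F w) -/(nsS G w) h1 h3 opprD.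
- move=> c F _ [h1 h2]; split; last by rewrite /nsscale h2 mulr0.
  by move=> w; rewrite /nsS /nsscale mulrCA -/(nsS F w) h1 mulrN.
- move=> F G _ [h1 h2] _ [h3 h4]; split; last first.
    by rewrite /nsbr /nssub /nsmul !big_ord1 /= mulrC subrr.
  move=> w; rewrite /nsS /nsbr /nssub mulrBr -/(nsS (nsmul F G) w) -/(nsS (nsmul G F) w).
  rewrite !nsS_mul /nsmul opprB; congr (_ - _); apply: eq_bigr => j _.
    by rewrite h1 h3 mulrNN mulrC.
  by rewrite h1 h3 mulrNN mulrC.
- move=> F G he _ [h1 h2]; split; last by rewrite -he.
  by move=> w; rewrite /nsS -!he -/(nsS F w) h1.
Qed.

Lemma lie_series_S F : lie_series F -> (forall w, nsS F w = - F w) /\ F [::] = 0.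
Proof.
move=> hF; split.
  move=> w; have [h _] := lie_S (hF (size w)).
  have := h w; rewrite /nsS /nshom size_rev eqxx => ->.
  by [].
by have [_ h] := lie_S (hF 0%N); move: h; rewrite /nshom /=.
Qed.
End NS.


Lemma bwords_mem k u : u \in bwords k -> size u = k.
Proof.
elim: k u => [|k IH] u /=; first by rewrite inE => /eqP ->.
rewrite !mem_cat in_nil orbF => /orP[] /mapP[w hw ->] /=; by rewrite (IH _ hw).
Qed.

Section BW.
Variable V : zmodType.

Lemma big_bwordsS k (F : seq bool -> V) : \sum_(u <- bwords k.+1) F u =
  \sum_(u <- bwords k) F (false :: u) + \sum_(u <- bwords k) F (true :: u).
Proof. by rewrite /= !big_cat big_nil !big_map Monoid.mulm1. Qed.

Lemma bwords_split a b (F : seq bool -> V) :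
  \sum_(u <- bwords (a + b)) F u =
  \sum_(u1 <- bwords a) \sum_(u2 <- bwords b) F (u1 ++ u2).
Proof.
elim: a F => [|a IH] F; first by rewrite /= big_seq1.
by rewrite addSn !big_bwordsS !IH.
Qed.

Lemma bwords_rev k (F : seq bool -> V) :
  \sum_(u <- bwords k) F (rev u) = \sum_(u <- bwords k) F u.
Proof.
elim: k F => [|k IH] F; first by rewrite /= !big_seq1.
rewrite big_bwordsS.
rewrite (eq_bigr (fun u => F (rcons (rev u) false))); last by move=> u _; rewrite rev_cons.
rewrite [X in _ + X](eq_bigr (fun u => F (rcons (rev u) true))); last by move=> u _; rewrite rev_cons.
rewrite (IH (fun v => F (rcons v false))) (IH (fun v => F (rcons v true))).
rewrite -addn1 bwords_split -big_split /=; apply: eq_bigr => u _.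
by rewrite big_cons big_seq1 !cats1.
Qed.
End BW.


Section Sub.
Variables (R : numFieldType) (N : nat) (P Q : 'M[R]_N).
Local Notation Sub F := (mssubst F P Q).
Local Notation w := (mxword P Q).

Lemma mxword_cat u v : w (u ++ v) = w u *m w v.
Proof.
elim: u => [|b u IH]; first by rewrite /= mul1mx.
have e : forall s, w (b :: s) = (if b then Q else P) *m w s by [].
by rewrite cat_cons !e IH mulmxA.
Qed.

Lemma mxword_tr u : P^T = P -> Q^T = Q -> (w u)^T = w (rev u).
Proof.
move=> hP hQ; elim: u => [|b u IH]; first by rewrite /mxword /= trmx1.
have e : w (b :: u) = (if b then Q else P) *m w u by [].
have e2 : w [:: b] = (if b then Q else P) *m 1%:M by [].
rewrite e trmx_mul IH rev_cons -cats1 mxword_cat e2 mulmx1.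
by clear e e2; case: b; rewrite ?hP ?hQ.
Qed.

Lemma Sub_mul (F G : seq bool -> R) : Sub (nsmul F G) = msmul (Sub F) (Sub G).
Proof.
apply: functional_extensionality => k; rewrite /mssubst /msmul.
transitivity (\sum_(j < k.+1) \sum_(u <- bwords k) (F (take j u) * G (drop j u)) *: w u).
  rewrite [RHS]exchange_big /= big_seq [RHS]big_seq; apply: eq_bigr => u hu.
  by rewrite /nsmul (bwords_mem hu) scaler_suml.
apply: eq_bigr => j _; have hj : (j <= k)%N by rewrite -ltnS ltn_ord.
rewrite -{1}(subnKC hj) bwords_split mulmx_suml big_seq [RHS]big_seq.
apply: eq_bigr => u1 hu1; rewrite mulmx_sumr; apply: eq_bigr => u2 _.
rewrite take_size_cat ?drop_size_cat ?(bwords_mem hu1) // mxword_cat.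
by rewrite -scalemxAl -scalemxAr scalerA.
Qed.

Lemma Sub_one : Sub (@nsone R bool) = msone R N.
Proof.
apply: functional_extensionality => k; rewrite /mssubst /msone.
case: k => [|k]; first by rewrite /= big_seq1 scale1r.
rewrite big_seq big1 // => u hu; have := bwords_mem hu.
by case: u hu => // b u _ _; rewrite scale0r.
Qed.

Lemma Sub_pow F m : Sub (nsexpn F m) = mspow (Sub F) m.
Proof.
elim: m => [|m IH] /=; first exact: Sub_one.
by rewrite Sub_mul IH.
Qed.

Lemma Sub_exp F : Sub (nsexp F) = msexp (Sub F).
Proof.
apply: functional_extensionality => d; rewrite /mssubst /msexp /nsexp.
transitivity (\sum_(m < d.+1) \sum_(u <- bwords d) ((m`!%:R)^-1 * nsexpn F m u) *: w u).
  rewrite [RHS]exchange_big /= big_seq [RHS]big_seq; apply: eq_bigr => u hu.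
  by rewrite (bwords_mem hu) scaler_suml.
apply: eq_bigr => m _; rewrite -Sub_pow /mssubst scaler_sumr.
by apply: eq_bigr => u _; rewrite scalerA.
Qed.

Lemma Sub_S F : P^T = P -> Q^T = Q -> star (Sub F) = Sub (nsS F).
Proof.
move=> hP hQ; apply: functional_extensionality => k.
rewrite /star /mseps /mstr /mssubst linear_sum scaler_sumr.
rewrite -(bwords_rev k (fun u => nsS F u *: w u)) big_seq [RHS]big_seq.
apply: eq_bigr => u hu; rewrite linearZ /= mxword_tr // /nsS size_rev revK (bwords_mem hu).
by rewrite scalerA mulrC.
Qed.

Lemma Sub_opp F : Sub (fun u => - F u) = msopp (Sub F).
Proof.
apply: functional_extensionality => k; rewrite /mssubst /msopp -sumrN.
by apply: eq_bigr => u _; rewrite scaleNr.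
Qed.

Lemma Sub0 F : Sub F 0%N = F [::] *: 1%:M.
Proof. by rewrite /mssubst /= big_seq1. Qed.
End Sub.


Lemma uni_one (R : numFieldType) N : uni (msone R N).
Proof. by rewrite /uni star_one msmul1l. Qed.

Lemma phil_tr (R : numFieldType) n N (phi : 'I_n -> 'I_n -> 'M[R]_N) c :
  (forall i j, (phi i j)^T = phi i j) -> (phil phi c)^T = phil phi c.
Proof.
move=> hs; rewrite /phil linear_sum; apply: eq_bigr => j _.
rewrite linear_sum; apply: eq_bigr => k _; by rewrite linearZ /= hs.
Qed.

Unset Implicit Arguments.
Theorem mainTheorem6 (R : realType) (n N : nat)
  (rho : {perm 'I_n} -> 'M[R]_N) (phi : 'I_n -> 'I_n -> 'M[R]_N)
  (Phi : seq bool -> R) (cx cy : 'I_n.-1 -> 'I_n -> 'I_n -> R) :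
  (* rho : S_n -> GL_N(R) is a group morphism, S_n acting by composition *)
  rho 1%g = 1%:M ->
  (forall w v : {perm 'I_n}, rho (v * w)%g = rho w *m rho v) ->
  (* phi : T_n -> gl_N(R) is a Lie algebra representation compatible with rho *)
  is_Tn_rep phi ->
  (forall (w : {perm 'I_n}) (i j : 'I_n),
      rho w *m phi i j *m invmx (rho w) = phi (w i) (w j)) ->
  (* Phi \in M_1(R) *)
  drinfeld_associator Phi ->
  (* sigma_1 |-> (1 2) exp(t_12) *)
  (forall i : 'I_n.-1, val i = 0%N -> forall j k, cx i j k = 0 /\ cy i j k = 0) ->
  (* R is a group morphism B_n -> GL_N(R[[h]]) (braid relations) *)
  (forall i j : 'I_n.-1, (i.+1 < j)%N -> forall k,
      msmul (Bn_gen rho phi Phi cx cy i) (Bn_gen rho phi Phi cx cy j) k =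
      msmul (Bn_gen rho phi Phi cx cy j) (Bn_gen rho phi Phi cx cy i) k) ->
  (forall i j : 'I_n.-1, val j = (val i).+1 -> forall k,
      msmul (Bn_gen rho phi Phi cx cy i)
        (msmul (Bn_gen rho phi Phi cx cy j) (Bn_gen rho phi Phi cx cy i)) k =
      msmul (Bn_gen rho phi Phi cx cy j)
        (msmul (Bn_gen rho phi Phi cx cy i) (Bn_gen rho phi Phi cx cy j)) k) ->
  (* hypotheses of the theorem *)
  (forall w : {perm 'I_n}, rho w *m (rho w)^T = 1%:M) ->
  (forall i j : 'I_n, (phi i j)^T = phi i j) ->
  (* conclusion: R(B_n) \subset U_N^eps(R((h))) *)
  forall w : seq (bool * 'I_n.-1), unitary_eps (Bn_word rho phi Phi cx cy w).
Proof.
move=> _ _ _ _ [[Psi [hL hPsi]] _ _ _] _ _ _ horth hsym.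
have ePhi : Phi = nsexp Psi by apply: functional_extensionality.
have [hS h0] := lie_series_S hL.
have hgen : forall i, uni (Bn_gen rho phi Phi cx cy i).
  move=> i; rewrite /Bn_gen; apply: uni_gen.
  - have hP := phil_tr (cx i) hsym; have hQ := phil_tr (cy i) hsym.
    rewrite ePhi Sub_exp; apply: uni_exp.
      by rewrite Sub0 h0 scale0r.
    rewrite Sub_S //.
    have -> : nsS Psi = (fun u => - Psi u) by apply: functional_extensionality.
    by rewrite Sub_opp.
  - exact: uni_const.
  - exact: uni_exph.
have huw : forall w, uni (Bn_word rho phi Phi cx cy w).
  elim => [|[b i] w IH] /=; first exact: uni_one.
  apply: uni_mul => //; case: b => /=; first exact: hgen.
  by rewrite uni_inv //; apply: uni_star.
move=> w k; have [h1 h2] := huw w; split.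
  exact: (congr1 (fun F => F k) h1).
exact: (congr1 (fun F => F k) h2).
Qed.
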